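(* Let $m\in\mathbb{N}$, $\varphi_k\in(0,\pi)$ and $c_k,d_k\geq0$ for $k=1,\dots,m$, and set $\alpha_k=e^{i\varphi_k}$. If $\cos\varphi_1,\dots,\cos\varphi_m$ are algebraically independent over $\mathbb{Q}$, then the Lévy measure $\sum_{k=1}^m(c_k\delta_{\alpha_k}+d_k\delta_{\bar\alpha_k})$ is L-unique.
   Context: A Lévy measure on $\mathbb{T}$ is a positive Borel measure $\rho$ with $\rho(\{1\})=0$ and $1-\Re s\in L^1(\rho)$. For a Lévy measure $\rho$, $\nu_\circledast^{(1,0,\rho)}$ is the probability measure on $\mathbb{T}$ with $\int s^n\,d\nu=\exp\big(\int_{\mathbb{T}}(s^n-1-in\Im s)\,d\rho(s)\big)$, $n\in\mathbb{Z}$. $\rho$ is L-unique if the only Lévy measure $\widetilde\rho$ with $\nu_\circledast^{(1,0,\widetilde\rho)}=\nu_\circledast^{(1,0,\rho)}$ is $\widetilde\rho=\rho$. *)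

(* Defs.v *)
From HB Require Import structures.
From mathcomp Require Import all_boot all_order all_algebra.
From mathcomp Require Import all_classical all_reals all_analysis.
From mathcomp Require mpoly.
Import (canonicals) mpoly.
Set Implicit Arguments. Unset Strict Implicit. Unset Printing Implicit Defensive.
Import Order.TTheory GRing.Theory Num.Theory.
Import numFieldNormedType.Exports.
Local Open Scope classical_set_scope.
Local Open Scope ring_scope.

(* Convention: the unit circle T is parametrized by the angle
   theta in [0, 2 pi) via s = e^{i theta} (a Borel isomorphism).
   A (Borel) measure on T is represented by a measure on R
   carried by [0, 2 pi).  Then: s^n = cos(n theta) + i sin(n theta),
   Re s = cos theta, Im s = sin theta, the point 1 is theta = 0,
   e^{i phi} is theta = phi, and conj(e^{i phi}) is theta = 2 pi - phi
   for phi in (0, pi). *)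

Section Defs.
Context (R : realType).

Definition circ : set R := `[0%R, (2 * pi)%R[.

Definition on_circle (mu : set R -> \bar R) : Prop :=
  mu (~` circ) = 0%E.

Definition levy_measure (rho : {measure set R -> \bar R}) : Prop :=
  [/\ on_circle rho,
      rho [set 0%R] = 0%E &
      rho.-integrable setT (fun t => ((1 - cos t)%R)%:E)].

(* nu is nu_circledast^{(1,0,rho)}: a probability measure on T with
   int s^n dnu = exp( int (s^n - 1 - i n Im s) drho ), for all n in Z.
   With a := int (cos(n t) - 1) drho and b := int (sin(n t) - n sin t) drho,
   exp(a + i b) = e^a cos b + i e^a sin b; real and imaginary parts are
   compared separately. *)
Definition is_nu_levy (rho : {measure set R -> \bar R})
  (nu : probability R R) : Prop :=
  on_circle nu /\
  forall n : int,
    let a := Rintegral rho setT (fun t => cos (n%:~R * t) - 1) in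
    let b := Rintegral rho setT (fun t => sin (n%:~R * t) - n%:~R * sin t) in
    Rintegral nu setT (fun t => cos (n%:~R * t)) = expR a * cos b /\
    Rintegral nu setT (fun t => sin (n%:~R * t)) = expR a * sin b.

Definition same_measure (mu1 mu2 : set R -> \bar R) : Prop :=
  forall A : set R, measurable A -> mu1 A = mu2 A.

Definition L_unique (rho : {measure set R -> \bar R}) : Prop :=
  levy_measure rho /\
  forall (rho' : {measure set R -> \bar R}) (nu nu' : probability R R),
    levy_measure rho' -> is_nu_levy rho nu -> is_nu_levy rho' nu' ->
    same_measure nu nu' -> same_measure rho' rho.

Definition alg_indep_Q (m : nat) (x : 'I_m -> R) : Prop :=
  forall p : mpoly.mpoly m rat,
    mpoly.mmap (@ratr R) x p = 0 -> p = 0.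

End Defs.

(* Main.v *)
Require Import Defs.
From HB Require Import structures.
From mathcomp Require Import all_boot all_order all_algebra.
From mathcomp Require Import all_classical all_reals all_analysis.
From mathcomp Require Import measurable_realfun.
From mathcomp Require Import ring lra.
From mathcomp Require mpoly.
Import (canonicals) mpoly.
Import Order.TTheory GRing.Theory Num.Theory.
Import numFieldNormedType.Exports.
Set Implicit Arguments. Unset Strict Implicit. Unset Printing Implicit Defensive.
Local Open Scope classical_set_scope.
Local Open Scope ring_scope.

Section G.
Context {V : pzRingType}.
Definition Lop (a : V) (s : nat -> V) : nat -> V :=
  fun n => s n.+2 - 2 * a * s n.+1 + s n.

Fixpoint Iter (a : nat -> V) (J : nat) (s : nat -> V) : nat -> V :=
  match J with 0%N => s | J'.+1 => Iter (fun i => a i.+1) J' (Lop (a 0%N) s) end.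
End G.

Lemma Iter_morph (V W : pzRingType) (f : {rmorphism V -> W}) J a s n :
  f (Iter a J s n) = Iter (fun i => f (a i)) J (fun k => f (s k)) n.
Proof.
elim: J a s n => [//|J IH] a s n /=.
rewrite IH; congr Iter; apply/funext => k.
by rewrite /Lop rmorphD rmorphB !rmorphM rmorph_nat.
Qed.

Section Seq.
Context {R : realType}.


Lemma Lop_lin (I : Type) (r : seq I) (a : R) (g : I -> R) (s : I -> nat -> R) :
  Lop a (fun n => \sum_(k <- r) g k * s k n) =
  (fun n => \sum_(k <- r) g k * Lop a (s k) n).
Proof.
apply/funext => n; rewrite /Lop.
rewrite [RHS](eq_bigr (fun k => (g k * s k n.+2 - 2 * a * (g k * s k n.+1)) + g k * s k n)); last first.
  by move=> k _; ring.
by rewrite big_split /= sumrB mulr_sumr.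
Qed.

Lemma Iter_lin (I : Type) (r : seq I) J (a : nat -> R) (g : I -> R) (s : I -> nat -> R) :
  Iter a J (fun n => \sum_(k <- r) g k * s k n) =
  (fun n => \sum_(k <- r) g k * Iter a J (s k) n).
Proof.
elim: J a s => [//|J IH] a s /=.
by rewrite Lop_lin IH.
Qed.

Lemma Iter_scale J (a : nat -> R) (c : R) (s : nat -> R) :
  Iter a J (fun n => c * s n) = (fun n => c * Iter a J s n).
Proof.
have := @Iter_lin unit [:: tt] J a (fun _ => c) (fun _ => s).
by under eq_fun do rewrite big_seq1; under [in RHS]eq_fun do rewrite big_seq1.
Qed.

Lemma Iter0 J (a : nat -> R) : Iter a J (fun _ => 0) = (fun _ => 0).
Proof.
have := Iter_scale J a 0 (fun _ => 0).
by under eq_fun do rewrite mul0r; move=> ->; apply/funext => n; rewrite mul0r.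
Qed.

Lemma Lop_affine (s : nat -> R) (u v : R) :
  Lop 1 (fun n => s n + (u + n%:R * v)) = Lop 1 s.
Proof.
by apply/funext => n; rewrite /Lop -[n.+2]addn2 -[n.+1]addn1 !natrD; ring.
Qed.

Lemma Lop_sin (a th ph : R) :
  Lop a (fun n => sin (th + n%:R * ph)) =
  (fun n => 2 * (cos ph - a) * sin ((th + ph) + n%:R * ph)).
Proof.
apply/funext => n; rewrite /Lop.
set u := (th + ph) + n%:R * ph.
have -> : th + n.+2%:R * ph = u + ph.
  by rewrite /u -[n.+2]addn2 natrD; ring.
have -> : th + n.+1%:R * ph = u.
  by rewrite /u -[n.+1]addn1 natrD; ring.
have -> : th + n%:R * ph = u - ph by rewrite /u; ring.
rewrite sinD sinB; ring.
Qed.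

Lemma Iter_sin J (a : nat -> R) (th ph : R) :
  Iter a J (fun n => sin (th + n%:R * ph)) =
  (fun n => (\prod_(i < J) (2 * (cos ph - a i))) * sin ((th + J%:R * ph) + n%:R * ph)).
Proof.
elim: J a th => [|J IH] a th /=.
  by apply/funext => n; rewrite big_ord0 mul1r mul0r addr0.
rewrite Lop_sin Iter_scale IH; apply/funext => n.
rewrite big_ord_recl /= mulrA -[J.+1]addn1 natrD; congr (_ * sin _); ring.
Qed.

Lemma Iter_sum_sin m J (a : nat -> R) (g th ph : 'I_m -> R) :
  Iter a J (fun n => \sum_(k < m) g k * sin (th k + n%:R * ph k)) =
  (fun n => \sum_(k < m) (g k * \prod_(i < J) (2 * (cos (ph k) - a i))) *
             sin ((th k + J%:R * ph k) + n%:R * ph k)).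
Proof.
rewrite Iter_lin; apply/funext => n; apply: eq_bigr => k _.
by rewrite Iter_sin mulrA.
Qed.

Definition ext m (f : 'I_m -> R) (i : nat) : R :=
  if insub i is Some k then f k else 0.

Lemma extE m (f : 'I_m -> R) (k : 'I_m) : ext f k = f k.
Proof. by rewrite /ext valK. Qed.

Lemma sin_consec (u ph : R) : 0 < sin ph -> sin u = 0 -> sin (u + ph) = 0 -> False.
Proof.
move=> sp su sup; move: sup; rewrite sinD su mul0r add0r => /eqP.
rewrite mulf_eq0 (gt_eqF sp) orbF => /eqP cu.
by have := cos2Dsin2 u; rewrite cu su expr0n /= addr0 => /eqP; rewrite eq_sym oner_eq0.
Qed.

Lemma lin_indep m (g th ph : 'I_m -> R) :
  (forall k, 0 < ph k < pi) ->
  (forall i j, cos (ph i) = cos (ph j) -> i = j) ->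
  (forall n : nat, \sum_(k < m) g k * sin (th k + n%:R * ph k) = 0) ->
  forall k, g k = 0.
Proof.
move=> hph hinj h j.
pose a (i : nat) := if i == j :> nat then cos (ph j) - 1 else ext (fun k => cos (ph k)) i.
have H0 : (fun n : nat => \sum_(k < m) g k * sin (th k + n%:R * ph k)) = (fun _ => 0).
  by apply/funext => n; rewrite h.
have := Iter_sum_sin m a g th ph; rewrite H0 Iter0 => H.
have Hn : forall n : nat, (g j * \prod_(i < m) (2 * (cos (ph j) - a i))) *
     sin (th j + m%:R * ph j + n%:R * ph j) = 0.
  move=> n; have /= H1 := congr1 (fun f => f n) H.
  rewrite (bigD1 j) //= in H1; rewrite [X in _ + X]big1 ?addr0 in H1; first by rewrite H1.
  move=> k hk.
  rewrite (bigD1 k) //= /a.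
  have -> : (k == j :> nat) = false by apply/negbTE.
  by rewrite extE subrr mulr0 mul0r mulr0 mul0r.
have hP : \prod_(i < m) (2 * (cos (ph j) - a i)) != 0.
  rewrite prodf_seq_neq0; apply/allP => i _ /=.
  rewrite mulf_eq0 negb_or pnatr_eq0 /= /a.
  have [hij|hij] := eqVneq (i : nat) j.
    by rewrite (_ : cos (ph j) - (cos (ph j) - 1) = 1) ?oner_eq0 //; ring.
  rewrite extE subr_eq0; apply/eqP => /hinj ji; move: hij; by rewrite ji eqxx.
apply/eqP; apply: contraT => gj; exfalso.
have sp : 0 < sin (ph j) by apply: sin_gt0_pi.
apply: (sin_consec sp (u := th j + m%:R * ph j)).
- have := Hn 0%N; rewrite mul0r addr0 => /eqP; rewrite mulf_eq0 mulf_eq0 (negbTE gj) (negbTE hP) /=.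
  by move/eqP.
- have := Hn 1%N; rewrite mul1r => /eqP; rewrite mulf_eq0 mulf_eq0 (negbTE gj) (negbTE hP) /=.
  by move/eqP.
Qed.

End Seq.

Section Trig.
Context {R : realType}.

Lemma twopiE : 2 * pi = pi *+ 2 :> R.
Proof. by rewrite mulr_natl. Qed.

Lemma cos_periodn (x : R) (n : nat) : cos (x + 2 * pi * n%:R) = cos x.
Proof.
elim: n => [|n IH]; first by rewrite mulr0 addr0.
rewrite -[n.+1]addn1 natrD mulrDr mulr1 addrA twopiE.
by rewrite cosD2pi -twopiE.
Qed.

Lemma sin_periodn (x : R) (n : nat) : sin (x + 2 * pi * n%:R) = sin x.
Proof.
elim: n => [|n IH]; first by rewrite mulr0 addr0.
rewrite -[n.+1]addn1 natrD mulrDr mulr1 addrA twopiE.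
by rewrite sinD2pi -twopiE.
Qed.

Lemma cos_periodz (x : R) (k : int) : cos (x + 2 * pi * k%:~R) = cos x.
Proof.
case: k => n; first exact: cos_periodn.
rewrite NegzE mulrNz mulrN.
by rewrite -[in RHS](subrK (2 * pi * (n.+1)%:~R) x) cos_periodn.
Qed.

Lemma sin_periodz (x : R) (k : int) : sin (x + 2 * pi * k%:~R) = sin x.
Proof.
case: k => n; first exact: sin_periodn.
rewrite NegzE mulrNz mulrN.
by rewrite -[in RHS](subrK (2 * pi * (n.+1)%:~R) x) sin_periodn.
Qed.

Lemma cos_eq_circ (t ph : R) : 0 <= t < 2 * pi -> 0 <= ph <= pi ->
  cos t = cos ph -> t = ph \/ t = 2 * pi - ph.
Proof.
move=> /andP[t0 t2] /andP[p0 p1] e.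
have pi0 := pi_gt0 R.
have [tp|tp] := leP t pi.
  left; apply: cos_inj => //; rewrite in_itv /=; apply/andP; split => //.
right.
have e2 : cos (2 * pi - t) = cos ph.
  by rewrite -e -[in RHS](cosN t) addrC twopiE cosD2pi.
have := @cos_inj R (2 * pi - t) ph.
rewrite !in_itv /= => h.
suff -> : ph = 2 * pi - t by ring.
apply/esym/h => //; apply/andP; split => //; lra.
Qed.

Lemma cos_eq1 (u : R) : cos u = 1 -> exists k : int, u = 2 * pi * k%:~R.
Proof.
move=> cu.
have pi0 := pi_gt0 R.
have p2 : 0 < 2 * pi :> R by lra.
set k := Num.floor (u / (2 * pi)).
have := floor_itv (u / (2 * pi)); rewrite -/k intrD => /andP[h1 h2].
set v := u - 2 * pi * k%:~R.
have v0 : 0 <= v < 2 * pi.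
  move: h1 h2; rewrite ler_pdivlMr // ltr_pdivrMr // /v => h1 h2.
  apply/andP; split; nra.
have cv : cos v = cos 0.
  by rewrite cos0 -cu /v; have := cos_periodz u (-k); rewrite mulrNz mulrN.
exists k.
have := cos_eq_circ v0 _ cv.
rewrite lexx pi_ge0 => /(_ isT) [v00|]; first by rewrite -[u](subrK (2 * pi * k%:~R)) -/v v00 add0r.
move: v0 => /andP[_]; rewrite subr0 => ? ?; lra.
Qed.

Lemma cossin_eq (b b' : R) : cos b = cos b' -> sin b = sin b' ->
  exists k : int, b' - b = 2 * pi * k%:~R.
Proof.
move=> hc hs; apply: cos_eq1.
by rewrite cosB -hc -hs -!expr2 cos2Dsin2.
Qed.

Lemma exp_cossin_eq (a a' b b' : R) :
  expR a * cos b = expR a' * cos b' -> expR a * sin b = expR a' * sin b' ->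
  a = a' /\ cos b = cos b' /\ sin b = sin b'.
Proof.
move=> hc hs.
have e2 : expR a ^+ 2 = expR a' ^+ 2.
  have := cos2Dsin2 b; have := cos2Dsin2 b'.
  move=> h1 h2.
  by rewrite -[LHS]mulr1 -h2 -[RHS]mulr1 -h1 !mulrDr -!exprMn hc hs.
have ea : expR a = expR a'.
  by apply/eqP; rewrite -(@eqrXn2 _ 2) ?expR_ge0 // e2.
have aa : a = a' by apply: expR_inj.
have ne : expR a != 0 by rewrite expR_eq0.
split => //; split.
  by apply: (mulfI ne); rewrite hc ea.
by apply: (mulfI ne); rewrite hs ea.
Qed.

End Trig.


Section NT.
Context {R : realType}.

Definition Apoly m (i : nat) : mpoly.mpoly m rat :=
  if i is i'.+1 then (if insub i' is Some k then mpoly.mpolyX rat (mpoly.mnm1 k) else 0) else 1.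
Definition areal m (y : 'I_m -> R) (i : nat) : R := if i is i'.+1 then ext y i' else 1.

Lemma mmap_A m (y : 'I_m -> R) i : mpoly.mmap (@ratr R) y (Apoly m i) = areal y i.
Proof.
case: i => [|i] /=; first by rewrite rmorph1.
rewrite /ext; case: insubP => [k _ _|_]; last by rewrite rmorph0.
by rewrite mpoly.mmapX mpoly.mmap1U.
Qed.

Lemma indep_inj m (x : 'I_m -> R) : alg_indep_Q x -> forall i j, x i = x j -> i = j.
Proof.
move=> h i j e; apply/eqP; apply: contraT => ne.
have := h (mpoly.mpolyX rat (mpoly.mnm1 i) - mpoly.mpolyX rat (mpoly.mnm1 j)).
rewrite mpoly.mmapB !mpoly.mmapX !mpoly.mmap1U e subrr => /(_ erefl).
move/(congr1 (mpoly.mcoeff (mpoly.mnm1 i))).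
rewrite mpoly.mcoeffB !mpoly.mcoeffXU eqxx eq_sym (negbTE ne) subr0 => /eqP.
by rewrite raddf0 oner_eq0.
Qed.

Lemma cos_lt1 (p : R) : 0 < p < pi -> cos p < 1.
Proof.
move=> /andP[p0 p1]; rewrite -cos0 ltr_cos // !in_itv /= ?lexx ?pi_ge0 //.
by rewrite (ltW p0) (ltW p1).
Qed.

Lemma Iter_F m J (a : nat -> R) (e th ph : 'I_m -> R) (u c : R) : a 0%N = 1 ->
  Iter a J.+1 (fun n => \sum_(k < m) e k * sin (th k + n%:R * ph k) + (u + n%:R * c)) =
  (fun n => \sum_(k < m) (e k * \prod_(i < J.+1) (2 * (cos (ph k) - a i))) *
             sin ((th k + J.+1%:R * ph k) + n%:R * ph k)).
Proof.
move=> a0; rewrite -Iter_sum_sin /= a0 Lop_affine.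
by [].
Qed.

Lemma NT m (ph e : 'I_m -> R) (z : nat -> int) :
  (forall k, 0 < ph k < pi) -> alg_indep_Q (fun k => cos (ph k)) ->
  (forall n : nat, \sum_(k < m) e k * (sin (n%:R * ph k) - n%:R * sin (ph k))
                   = 2 * pi * (z n)%:~R) ->
  forall k, e k = 0.
Proof.
move=> hph hind hz.
have pi0 := pi_gt0 R.
have p2 : 2 * pi != 0 :> R by rewrite mulf_neq0 // gt_eqF.
set S := \sum_(k < m) e k * sin (ph k).
pose F := fun n : nat => \sum_(k < m) e k * sin (0 + n%:R * ph k) + (0 + n%:R * - S).
have FE : forall n, F n = 2 * pi * (z n)%:~R.
  move=> n; rewrite -hz /F /S !add0r mulrN mulr_sumr -sumrN -big_split /=.
  by apply: eq_bigr => k _; rewrite add0r; ring.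
have zE : (fun n => ((z n)%:~R : R)) = (fun n => (2 * pi)^-1 * F n).
  by apply/funext => n; rewrite FE mulrA mulVf // mul1r.
pose W n := Iter (Apoly m) m.+1 (fun k => ((z k)%:~R : mpoly.mpoly m rat)) n.
have evW : forall (y : 'I_m -> R) n,
    mpoly.mmap (@ratr R) y (W n) = (2 * pi)^-1 * Iter (areal y) m.+1 F n.
  move=> y n; rewrite /W Iter_morph.
  have -> : (fun i => mpoly.mmap (@ratr R) y (Apoly m i)) = areal y.
    by apply/funext => i; rewrite mmap_A.
  have -> : (fun k => mpoly.mmap (@ratr R) y ((z k)%:~R)) = (fun n => ((z n)%:~R : R)).
    by apply/funext => k; rewrite rmorph_int.
  by rewrite zE Iter_scale.
have W0 : forall n, W n = 0.
  move=> n; apply: hind; rewrite evW /F Iter_F //.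
  rewrite big1 ?mulr0 // => k _.
  rewrite big_ord_recl /= (bigD1 k) //= /ext valK subrr.
  by rewrite !(mulr0, mul0r).
have H1 : forall n, Iter (areal (fun _ : 'I_m => 1)) m.+1 F n = 0.
  move=> n; have := evW (fun _ => 1) n; rewrite W0 rmorph0 => /esym /eqP.
  by rewrite mulf_eq0 invr_eq0 (negbTE p2) /= => /eqP.
move=> k.
have := @lin_indep R m
   (fun k => e k * \prod_(i < m.+1) (2 * (cos (ph k) - areal (fun _ : 'I_m => 1) i)))
   (fun k => 0 + m.+1%:R * ph k) ph hph (indep_inj hind).
move=> L.
have /eqP : e k * \prod_(i < m.+1) (2 * (cos (ph k) - areal (fun _ : 'I_m => 1) i)) = 0.
  by apply: L => n; have := H1 n; rewrite /F Iter_F.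
rewrite mulf_eq0 => /orP[/eqP //|].
rewrite prodf_seq_eq0 => /hasP[i _ /=]; rewrite mulf_eq0 pnatr_eq0 /= subr_eq0.
have -> : areal (fun _ : 'I_m => 1) i = 1.
  case: i => [[|i] hi] //=; rewrite /ext; case: insubP => // /negP; by rewrite ltnS in hi.
by move=> /eqP c1; have := cos_lt1 (hph k); rewrite c1 ltxx.
Qed.

End NT.

Section L1.
Context {R : realType}.

Lemma ext_ge0 m (c : 'I_m -> R) : (forall k, 0 <= c k) -> forall i, 0 <= ext c i.
Proof. by move=> h i; rewrite /ext; case: insubP => // k _ _; exact: h. Qed.

Definition nnext m (c : 'I_m -> R) (h : forall k, 0 <= c k) (i : nat) : {nonneg R} :=
  NngNum (ext_ge0 h i).

Definition dmeas m (c p : 'I_m -> R) (h : forall k, 0 <= c k) :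
  {measure set R -> \bar R}^nat :=
  fun i => mscale (nnext h i) (\d_(ext p i)).

Lemma L1ge0 (mu : {measure set R -> \bar R}) m (c d p q : 'I_m -> R) :
  (forall k, 0 <= c k) -> (forall k, 0 <= d k) ->
  (forall A, measurable A ->
     mu A = (\sum_(k < m) ((c k)%:E * \d_(p k) A + (d k)%:E * \d_(q k) A))%E) ->
  forall g : R -> \bar R, measurable_fun setT g -> (forall x, (0 <= g x)%E) ->
  (\int[mu]_(x in setT) g x = \sum_(k < m) ((c k)%:E * g (p k) + (d k)%:E * g (q k)))%E.
Proof.
move=> hc hd hmu g mg g0.
pose nu := measure_add (msum (dmeas p hc) m) (msum (dmeas q hd) m).
rewrite (eq_measure_integral nu); last first.
  move=> A mA _; rewrite hmu // /nu.
  transitivity (msum (dmeas p hc) m A + msum (dmeas q hd) m A)%E; last first.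
    by apply/esym; apply: measure_addE.
  rewrite /msum -big_split /=.
  by apply: eq_bigr => k _; rewrite /dmeas /mscale /= !extE.
rewrite ge0_integral_measure_add //; try by move=> x _; exact: g0.
rewrite !ge0_integral_measure_sum //; try by move=> x _; exact: g0.
rewrite -big_split /=; apply: eq_bigr => k _.
rewrite /dmeas !ge0_integral_mscale //; try by move=> x _; exact: g0.
by rewrite !integral_dirac // !diracT !mul1e /= !extE.
Qed.

Lemma L1 (mu : {measure set R -> \bar R}) m (c d p q : 'I_m -> R) :
  (forall k, 0 <= c k) -> (forall k, 0 <= d k) ->
  (forall A, measurable A ->
     mu A = (\sum_(k < m) ((c k)%:E * \d_(p k) A + (d k)%:E * \d_(q k) A))%E) ->
  forall f : R -> R, measurable_fun setT f ->
  mu.-integrable setT (EFin \o f) /\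
  Rintegral mu setT f = \sum_(k < m) (c k * f (p k) + d k * f (q k)).
Proof.
move=> hc hd hmu f mf.
have mEf : measurable_fun setT (EFin \o f) by exact/measurable_EFinP.
have L := L1ge0 hc hd hmu.
have ige0 : forall g : R -> R, measurable_fun setT g -> (forall x, 0 <= g x) ->
    mu.-integrable setT (EFin \o g) /\
    Rintegral mu setT g = \sum_(k < m) (c k * g (p k) + d k * g (q k)).
  move=> g mg g0.
  have mEg : measurable_fun setT (EFin \o g) by exact/measurable_EFinP.
  have E : (\int[mu]_(x in setT) (g x)%:E = (\sum_(k < m) (c k * g (p k) + d k * g (q k)))%:E)%E.
    rewrite (L _ mEg); last by move=> x; rewrite lee_fin.
    by rewrite -sumEFin; apply: eq_bigr => k _; rewrite EFinD !EFinM.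
  split; last by rewrite /Rintegral E.
  apply/integrableP; split => //.
  rewrite (eq_integral (fun x => (g x)%:E)); first by rewrite E ltry.
  by move=> x _ /=; rewrite ger0_norm.
have [i1 e1] := ige0 (fun x => `|f x|) (measurableT_comp (@normr_measurable _ _) mf) (fun x => normr_ge0 _).
have mf2 : measurable_fun setT (fun x => `|f x| - f x).
  by apply: measurable_funB => //; exact: measurableT_comp (@normr_measurable _ _) mf.
have [i2 e2] := ige0 (fun x => `|f x| - f x) mf2 (fun x => (ltac:(by rewrite subr_ge0 ler_norm))).
have fE : f = (fun x => `|f x| - (`|f x| - f x)).
  by apply/funext => x; ring.
split.
  rewrite fE; exact: (integrableB _ i1 i2).
rewrite fE RintegralB // e1 e2 -sumrB; apply: eq_bigr => k _; ring.
Qed.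

End L1.

Section H.
Context {R : realType}.

Lemma Iter_single J (a : nat -> R) (th ph u v : R) : a 0%N = 1 ->
  Iter a J.+1 (fun n => sin (th + n%:R * ph) + (u + n%:R * v)) =
  (fun n => (\prod_(i < J.+1) (2 * (cos ph - a i))) * sin ((th + J.+1%:R * ph) + n%:R * ph)).
Proof. by move=> a0; rewrite -Iter_sin /= a0 Lop_affine. Qed.

Lemma prod_half (h : nat -> R) m :
  \prod_(i < m.*2) h (i./2) = \prod_(k < m) h k ^+ 2.
Proof.
elim: m => [|m IH]; first by rewrite !big_ord0.
rewrite doubleS !big_ord_recr /= IH -mulrA; congr (_ * _).
by rewrite uphalf_double doubleK expr2.
Qed.

Lemma sin_mul_le (n : nat) (v : R) : `|sin (n%:R * v)| <= n%:R * `|sin v|.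
Proof.
elim: n => [|n IH]; first by rewrite !mul0r sin0 normr0.
rewrite -[n.+1]addn1 natrD mulrDl mul1r sinD.
have c1 := cos_max v; have c2 := cos_max (n%:R * v).
apply: (le_trans (ler_normD _ _)); rewrite !normrM mulrDl mul1r.
apply: lerD.
  by apply: (le_trans _ IH); rewrite ler_piMr.
by rewrite ler_piMl.
Qed.

Lemma one_minus_cos (u : R) : 1 - cos u = 2 * sin (u / 2) ^+ 2.
Proof.
have -> : u = u / 2 + u / 2 by rewrite -splitr.
rewrite cosD -!expr2 cos2sin2 -splitr; ring.
Qed.

Lemma cos_bound (n : int) (t : R) : 1 - cos (n%:~R * t) <= n%:~R ^+ 2 * (1 - cos t).
Proof.
wlog : n / (0 <= n)%R.
  move=> W; case: (lerP 0 n) => [|n0]; first exact: W.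
  have := W (- n) (ltac:(by rewrite oppr_ge0 ltW)).
  by rewrite mulrNz mulNr cosN sqrrN.
case: n => // n _.
have -> : ((Posz n)%:~R : R) = n%:R by [].
rewrite !one_minus_cos.
have h := sin_mul_le n (t / 2).
have h2 : sin (n%:R * (t / 2)) ^+ 2 <= n%:R ^+ 2 * sin (t / 2) ^+ 2.
  rewrite -(real_normK (num_real (sin (n%:R * (t / 2))))).
  rewrite -(real_normK (num_real (sin (t / 2)))) -exprMn.
  by rewrite lerXn2r // nnegrE // mulr_ge0.
rewrite -mulrA; nra.
Qed.


Lemma intD (mu : {measure set R -> \bar R}) (f g : R -> R) :
  mu.-integrable setT (EFin \o f) -> mu.-integrable setT (EFin \o g) ->
  mu.-integrable setT (EFin \o (fun t => f t + g t)).
Proof.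
move=> hf hg; have -> : EFin \o (fun t => f t + g t) = (fun t => (EFin \o f) t + (EFin \o g) t)%E.
  by apply/funext => t /=; rewrite EFinD.
by apply: integrableD.
Qed.

Lemma intB (mu : {measure set R -> \bar R}) (f g : R -> R) :
  mu.-integrable setT (EFin \o f) -> mu.-integrable setT (EFin \o g) ->
  mu.-integrable setT (EFin \o (fun t => f t - g t)).
Proof.
move=> hf hg; have -> : EFin \o (fun t => f t - g t) = (fun t => (EFin \o f) t - (EFin \o g) t)%E.
  by apply/funext => t /=; rewrite EFinB.
by apply: integrableB.
Qed.

Lemma intZ (mu : {measure set R -> \bar R}) (r : R) (f : R -> R) :
  mu.-integrable setT (EFin \o f) ->
  mu.-integrable setT (EFin \o (fun t => r * f t)).
Proof.
move=> hf; have -> : EFin \o (fun t => r * f t) = (fun t => r%:E * (EFin \o f) t)%E.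
  by apply/funext => t /=; rewrite EFinM.
by apply: integrableZl.
Qed.

Lemma IterInt (mu1 mu2 : {measure set R -> \bar R}) J : forall (a : nat -> R) (S : nat -> R -> R),
  (forall k, mu1.-integrable setT (EFin \o S k)) ->
  (forall k, mu2.-integrable setT (EFin \o S k)) ->
  (forall k, Rintegral mu1 setT (S k) = Rintegral mu2 setT (S k)) ->
  forall n, mu1.-integrable setT (EFin \o (fun t => Iter a J (fun k => S k t) n)) /\
    Rintegral mu1 setT (fun t => Iter a J (fun k => S k t) n) =
    Rintegral mu2 setT (fun t => Iter a J (fun k => S k t) n).
Proof.
elim: J => [|J IH] a S i1 i2 e n /=; first by split; [exact: i1| exact: e].
pose S' k t := S k.+2 t - 2 * a 0%N * S k.+1 t + S k t.
have iS' : forall mu : {measure set R -> \bar R},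
    (forall k, mu.-integrable setT (EFin \o S k)) -> forall k, mu.-integrable setT (EFin \o S' k).
  by move=> mu h k; apply: intD; [apply: intB; [|apply: intZ]|].
have E1 : forall mu : {measure set R -> \bar R},
    (forall k, mu.-integrable setT (EFin \o S k)) -> forall k,
    Rintegral mu setT (S' k) = Rintegral mu setT (S k.+2) - 2 * a 0%N * Rintegral mu setT (S k.+1)
                               + Rintegral mu setT (S k).
  move=> mu h k; rewrite /S'.
  rewrite (@RintegralD _ _ _ mu setT (fun x => S k.+2 x - 2 * a 0%N * S k.+1 x) (S k)) //; last first.
    by apply: intB; [|apply: intZ].
  rewrite (@RintegralB _ _ _ mu setT (S k.+2) (fun x => 2 * a 0%N * S k.+1 x)) //; last first.
    by apply: intZ.
  by rewrite (@RintegralZl _ _ _ mu setT (S k.+1) (2 * a 0%N)).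
have eS' : forall k, Rintegral mu1 setT (S' k) = Rintegral mu2 setT (S' k).
  by move=> k; rewrite !E1 // !e.
exact: (IH (fun i => a i.+1) S' (iS' _ i1) (iS' _ i2) eS' n).
Qed.

End H.

Section D.
Context {R : realType}.

Lemma mem_bigsetU m (F : 'I_m -> set R) x :
  (\big[setU/set0]_(k < m) F k) x <-> exists k, F k x.
Proof.
split.
  pose P (S : set R) := S x -> exists k, F k x.
  apply: (@big_ind _ P) => //.
  - move=> S1 S2 h1 h2 [/h1|/h2] //.
  - by move=> k _ h; exists k.
move=> [k hk]; rewrite (bigD1 k) //=; by left.
Qed.

Lemma measure_pt (mu : {measure set R -> \bar R}) (A : set R) (p : R) :
  measurable A -> mu (A `&` [set p]) = (mu [set p] * \d_p A)%E.
Proof.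
move=> mA; rewrite diracE; case: (boolP (p \in A)) => [/set_mem pA|pA].
  rewrite /= mule1; congr (mu _); apply/seteqP; split => [x [_ h] //|x /= ->]; by split.
rewrite /= mule0; have -> : A `&` [set p] = set0; last by rewrite measure0.
apply/seteqP; split => [x [xA /= xp]|//]; move: pA; rewrite -xp => /negP; apply; exact/mem_set.
Qed.

Lemma decomp (mu : {measure set R -> \bar R}) m (p q : 'I_m -> R) :
  (forall i j, p i = p j -> i = j) -> (forall i j, q i = q j -> i = j) ->
  (forall i j, p i <> q j) ->
  (exists N, [/\ measurable N, mu N = 0 &
     ~` (\big[setU/set0]_(k < m) ([set p k] `|` [set q k])) `<=` N]) ->
  forall A, measurable A ->
  mu A = (\sum_(k < m) (mu [set p k] * \d_(p k) A + mu [set q k] * \d_(q k) A))%E.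
Proof.
move=> ip iq pq [N [mN N0 ZN]] A mA.
set Z := \big[setU/set0]_(k < m) ([set p k] `|` [set q k]).
have mZ : measurable Z.
  by apply: bigsetU_measurable => k _; apply: measurableU; exact: measurable_set1.
have -> : mu A = mu (A `&` Z).
  rewrite -{1}(setUIDK A Z) measureU0 //; first exact: measurableI.
  - exact: measurableD.
  apply: (subset_measure0 _ mN) => //; first exact: measurableD.
  by move=> x [_ /ZN].
have -> : A `&` Z = \big[setU/set0]_(k < m) (A `&` [set p k] `|` A `&` [set q k]).
  apply/seteqP; split.
    move=> x [xA /mem_bigsetU [k hk]]; apply/mem_bigsetU; exists k.
    by case: hk => hx; [left|right]; split.
  move=> x /mem_bigsetU [k [[xA hx]|[xA hx]]]; split => //; apply/mem_bigsetU; exists k;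
   by [left|right].
rewrite measure_bigsetU_ord //.
- apply: eq_bigr => k _; rewrite measureU //.
  + by rewrite -(measure_pt _ _ mA) -(measure_pt _ _ mA).
  + by apply: measurableI => //; exact: measurable_set1.
  + by apply: measurableI => //; exact: measurable_set1.
  + apply/seteqP; split => [x [[_ /= ->] [_ /= e]]|//]; exact: (pq k k e).
- move=> k; apply: measurableU; apply: measurableI => //; exact: measurable_set1.
- move=> i j _ _ [x [[[_ /= hi]|[_ /= hi]] [[_ /= hj]|[_ /= hj]]]].
  + by apply: ip; rewrite -hi -hj.
  + by exfalso; apply: (pq i j); rewrite -hi -hj.
  + by exfalso; apply: (pq j i); rewrite -hi -hj.
  + by apply: iq; rewrite -hi -hj.
Qed.

End D.

Section PF.
Context {R : realType}.

Definition Pf m (x : 'I_m -> R) (t : R) : R :=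
  2 * (cos t - 1) * \prod_(k < m) (2 * (cos t - x k)) ^+ 2.

Definition aP m (x : 'I_m -> R) (i : nat) : R :=
  if i is i'.+1 then ext x (i'./2) else 1.

Definition SP (J0 : nat) (k : nat) (t : R) : R :=
  cos (((k : int) - (J0 : int))%:~R * t) - 1.

Lemma Pf_Iter m (x : 'I_m -> R) t :
  Iter (aP x) m.*2.+1 (fun k => SP m.*2.+1 k t) 0%N = Pf x t.
Proof.
set J0 := m.*2.+1.
have -> : (fun k => SP J0 k t) =
    (fun k : nat => sin ((pi / 2 - J0%:R * t) + k%:R * t) + (-1 + k%:R * 0)).
  apply/funext => k; rewrite /SP mulr0 addr0 intrB.
  rewrite (_ : pi / 2 - J0%:R * t + k%:R * t = (k%:R - J0%:R) * t + pi / 2); last by ring.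
  by rewrite sinDpihalf.
rewrite Iter_single // mul0r addr0.
rewrite (_ : pi / 2 - J0%:R * t + J0%:R * t = pi / 2); last by ring.
rewrite sin_pihalf mulr1 big_ord_recl /= /Pf; congr (_ * _).
rewrite (prod_half (fun k => 2 * (cos t - ext x k))).
by apply: eq_bigr => k _; rewrite extE.
Qed.

Lemma Pf_le0 m (x : 'I_m -> R) t : Pf x t <= 0.
Proof.
rewrite /Pf; apply: mulr_le0_ge0.
  by rewrite pmulr_rle0 // subr_le0 cos_le1.
by apply: prodr_ge0 => k _; exact: sqr_ge0.
Qed.

Lemma Pf_root m (x : 'I_m -> R) t k : cos t = x k -> Pf x t = 0.
Proof.
move=> e; rewrite /Pf (bigD1 k) //= e subrr mulr0 expr0n /= mul0r mulr0 //.
Qed.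

Lemma Pf_eq0 m (x : 'I_m -> R) t : Pf x t = 0 -> cos t = 1 \/ exists k, cos t = x k.
Proof.
rewrite /Pf => /eqP; rewrite !mulf_eq0 pnatr_eq0 /= subr_eq0 => /orP[/eqP|]; first by left.
rewrite prodf_seq_eq0 => /hasP[k _ /=]; rewrite expf_eq0 /= mulf_eq0 pnatr_eq0 /= subr_eq0.
by move=> /eqP e; right; exists k.
Qed.

End PF.

Section SUP.
Context {R : realType}.

Lemma mcos (g : R -> R) : measurable_fun setT g -> measurable_fun setT (fun t => cos (g t)).
Proof. by move=> mg; exact: (measurableT_comp (continuous_measurable_fun (@continuous_cos R)) mg). Qed.

Lemma msin (g : R -> R) : measurable_fun setT g -> measurable_fun setT (fun t => sin (g t)).
Proof. by move=> mg; exact: (measurableT_comp (continuous_measurable_fun (@continuous_sin R)) mg). Qed.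

Lemma mlin (r : R) : measurable_fun setT (fun t : R => r * t).
Proof. by apply: measurable_funM => //; exact: measurable_cst. Qed.

Lemma cos_circ_sym (n : int) (p : R) : cos (n%:~R * (2 * pi - p)) = cos (n%:~R * p).
Proof.
rewrite (_ : n%:~R * (2 * pi - p) = - (n%:~R * p) + 2 * pi * n%:~R); last by ring.
by rewrite cos_periodz cosN.
Qed.

Lemma sin_circ_sym (n : int) (p : R) : sin (n%:~R * (2 * pi - p)) = - sin (n%:~R * p).
Proof.
rewrite (_ : n%:~R * (2 * pi - p) = - (n%:~R * p) + 2 * pi * n%:~R); last by ring.
by rewrite sin_periodz sinN.
Qed.

Lemma fin_pt (mu : {measure set R -> \bar R}) (g : R -> R) (p : R) :
  mu.-integrable setT (EFin \o g) -> 0 < `|g p| -> mu [set p] \is a fin_num.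
Proof.
move=> ig gp.
have mg := measurable_int mu ig.
have := le_integral_abse mu measurableT mg gp.
move/integrableP : ig => [_ ilt].
rewrite ge0_fin_numE //.
move=> h.
have h2 : (`|g p|%:E * mu [set p] <= `|g p|%:E * mu (setT `&` [set x | `|g p|%:E <= `|(EFin \o g) x|]))%E.
  apply: lee_wpmul2l; first by rewrite lee_fin ltW.
  apply: le_measure; rewrite ?inE //.
    by apply: emeasurable_fun_c_infty => //; exact: measurableT_comp.
  by move=> x /= ->; split.
have h3 := le_lt_trans (le_trans h2 h) ilt.
move: h3; case: (mu [set p]) => [r _| |_]; [by rewrite ltry| |by rewrite ltNye].
by rewrite gt0_muley ?lte_fin // ltxx.
Qed.

End SUP.

Section SUP2.
Context {R : realType}.

Lemma mB (f g : R -> R) : measurable_fun setT f -> measurable_fun setT g ->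
  measurable_fun setT (fun t => f t - g t).
Proof. exact: measurable_funB. Qed.

Lemma cos2pim (p : R) : cos (2 * pi - p) = cos p.
Proof. by rewrite addrC twopiE cosD2pi cosN. Qed.

Lemma rho_support (rho rho' : {measure set R -> \bar R}) m (phi c d : 'I_m -> R) :
  (forall k, 0 < phi k < pi) -> (forall k, 0 <= c k) -> (forall k, 0 <= d k) ->
  alg_indep_Q (fun k => cos (phi k)) ->
  (forall A, measurable A -> rho A = (\sum_(k < m) ((c k)%:E * \d_(phi k) A
                            + (d k)%:E * \d_((2 * pi - phi k)%R) A))%E) ->
  levy_measure rho' ->
  (forall n : int, Rintegral rho' setT (fun t => cos (n%:~R * t) - 1) =
                   Rintegral rho setT (fun t => cos (n%:~R * t) - 1)) ->
  forall A, measurable A ->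
  rho' A = (\sum_(k < m) (rho' [set phi k] * \d_(phi k) A +
            rho' [set (2 * pi - phi k)%R] * \d_((2 * pi - phi k)%R) A))%E.
Proof.
move=> hphi hc hd hind hrho [oc0 z0 i1] hA.
pose x := fun k => cos (phi k).
have pi0 := pi_gt0 R.
have L := L1 hc hd hrho.
pose J0 := m.*2.+1.
have mSP : forall k : nat, measurable_fun setT (@SP R J0 k).
  by move=> k; have := mB (mcos (mlin (((k:int) - (J0:int))%:~R))) (@measurable_cst _ _ R R setT (1:R)).
have iSP' : forall k : nat, rho'.-integrable setT (EFin \o @SP R J0 k).
  move=> k; set n : int := ((k:int) - (J0:int)).
  apply: (le_integrable measurableT (g := EFin \o (fun t => n%:~R ^+ 2 * (1 - cos t)))).
  - exact/measurable_EFinP.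
  - move=> t _ /=; rewrite lee_fin /SP -/n.
    rewrite ler0_norm ?subr_le0 ?cos_le1 // ger0_norm; last first.
      by apply: mulr_ge0; [exact: sqr_ge0| rewrite subr_ge0 cos_le1].
    by rewrite opprB cos_bound.
  - exact: (intZ _ i1).
have iSP : forall k : nat, rho.-integrable setT (EFin \o @SP R J0 k) := fun k => (L _ (mSP k)).1.
have eSP : forall k : nat, Rintegral rho' setT (@SP R J0 k) = Rintegral rho setT (@SP R J0 k).
  by move=> k; exact: hA.
have [iP eP] := IterInt J0 (aP x) iSP' iSP eSP 0%N.
have PE : (fun t => Iter (aP x) J0 (fun k => SP J0 k t) 0%N) = Pf x.
  by apply/funext => t; exact: Pf_Iter.
rewrite PE in iP eP.
have mP : measurable_fun setT (Pf x) by apply/measurable_EFinP; exact: measurable_int iP.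
have P0 : Rintegral rho setT (Pf x) = 0.
  rewrite (L _ mP).2 big1 // => k _.
  rewrite (@Pf_root _ _ x (phi k) k) // (@Pf_root _ _ x (2 * pi - phi k) k) ?cos2pim //.
  by rewrite !mulr0 addr0.
have Pint0 : (\int[rho']_(t in setT) (Pf x t)%:E = 0)%E.
  rewrite -[LHS]fineK; last exact: integrable_fin_num iP.
  by have := eP; rewrite /Rintegral => ->; rewrite -/(Rintegral _ _ _) P0.
have Pabs0 : (\int[rho']_(t in setT) `|(EFin \o Pf x) t| = 0)%E.
  transitivity (\int[rho']_(t in setT) ((-1)%:E * (Pf x t)%:E))%E.
    apply: eq_integral => t _ /=; rewrite ler0_norm ?Pf_le0 //.
    by rewrite mulN1e EFinN.
  by rewrite integralZl // Pint0 mule0.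
have [N [mN N0 sub]] := (ae_eq_integral_abs rho' measurableT (measurable_int _ iP)).1 Pabs0.
apply: decomp.
- by move=> i j e; apply: (indep_inj hind); rewrite /= e.
- move=> i j e; apply: (indep_inj hind); congr cos.
  by have : phi i = phi j by move: e; lra.
- move=> i j e; have := hphi i; have := hphi j; move: e; lra.
have m1 : measurable (~` (@circ R)) by apply: measurableC; exact: measurable_itv.
have m2 : measurable ([set 0] : set R) by exact: measurable_set1.
exists ((~` (@circ R) `|` [set 0]) `|` N); split.
- by apply: measurableU => //; apply: measurableU.
- have m12 : measurable (~` (@circ R) `|` [set 0]) by apply: measurableU.
  by rewrite (measureU0 m12 mN N0) (measureU0 m1 m2 z0).
move=> t nZ.
have [ct|nct] := pselect ((@circ R) t); last by left; left.
have [t0|t0] := eqVneq t 0; first by left; right.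
have [Pt|Pt] := eqVneq (Pf x t) 0; last first.
  right; apply: sub => /= h; have [e] := h I; by rewrite e eqxx in Pt.
exfalso.
have ct' : 0 <= t < 2 * pi by move: ct; rewrite /circ /= in_itv.
case: (Pf_eq0 Pt) => [c1|[k ck]].
  have := @cos_eq_circ R t 0 ct'; rewrite cos0 => /(_ _ c1).
  case => [|//|]; first by apply/andP; split => //; exact: pi_ge0.
    by move=> e; move/eqP: t0; apply.
  by rewrite subr0 => e; move: ct'; rewrite e ltxx andbF.
have := hphi k => /andP[p0 p1].
have [e|e] := @cos_eq_circ R t (phi k) ct' (ltac:(by rewrite (ltW p0) (ltW p1))) ck.
  by apply: nZ; apply/mem_bigsetU; exists k; left.
by apply: nZ; apply/mem_bigsetU; exists k; right.
Qed.

End SUP2.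

Unset Implicit Arguments. Set Strict Implicit.

Lemma sin2pim {R : realType} (p : R) : sin (2 * pi - p) = - sin p.
Proof. by rewrite addrC twopiE sinD2pi sinN. Qed.

Lemma diracN {R : realType} (p : R) (A : set R) : ~ A p -> (\d_p A = 0 :> \bar R)%E.
Proof. by move=> h; rewrite diracE memNset. Qed.

Theorem theorem8p8 (R : realType) (m : nat) (phi c d : 'I_m -> R)
  (rho : {measure set R -> \bar R}) :
  (forall k, 0 < phi k < pi) ->
  (forall k, 0 <= c k) -> (forall k, 0 <= d k) ->
  alg_indep_Q (fun k => cos (phi k)) ->
  (forall A : set R, measurable A ->
     rho A = (\sum_(k < m) ((c k)%:E * \d_(phi k) A
                            + (d k)%:E * \d_((2 * pi - phi k)%R) A))%E) ->
  L_unique rho.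
Proof.
move=> hphi hc hd hind hrho.
have pi0 := pi_gt0 R.
have L := L1 hc hd hrho.
have incirc : forall k, (@circ R) (phi k) /\ (@circ R) (2 * pi - phi k).
  move=> k; have := hphi k => /andP[p0 p1].
  by rewrite /circ /= !in_itv /=; split; apply/andP; split; lra.
have m1c : measurable (~` (@circ R)) by apply: measurableC; exact: measurable_itv.
have mcos1 : measurable_fun setT (fun t : R => 1 - cos t).
  by have := mB (@measurable_cst _ _ R R setT (1:R)) (mcos (@measurable_id _ R setT)).
split.
  split.
  - rewrite /on_circle hrho // big1 // => k _.
    have [h1 h2] := incirc k.
    have e1 : (\d_(phi k) (~` (@circ R)) = 0 :> \bar R)%E by apply: diracN => /(_ h1).
    have e2 : (\d_((2 * pi - phi k)%R) (~` (@circ R)) = 0 :> \bar R)%E by apply: diracN => /(_ h2).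
    by rewrite e1 e2 !mule0 adde0.
  - rewrite hrho; last exact: measurable_set1.
    rewrite big1 // => k _; have := hphi k => /andP[p0 p1].
    have e1 : (\d_(phi k) [set (0:R)%R] = 0 :> \bar R)%E by apply: diracN => /= e; lra.
    have e2 : (\d_((2 * pi - phi k)%R) [set (0:R)%R] = 0 :> \bar R)%E by apply: diracN => /= e; lra.
    by rewrite e1 e2 !mule0 adde0.
  - exact: (L _ mcos1).1.
move=> rho' nu nu' hl' [_ Hnu] [_ Hnu'] hsame.
have eqI : forall f : R -> R, Rintegral nu setT f = Rintegral nu' setT f.
  by move=> f; rewrite /Rintegral (eq_measure_integral nu') // => A mA _; exact: hsame.
have key : forall n : int,
   Rintegral rho setT (fun t => cos (n%:~R * t) - 1) =
     Rintegral rho' setT (fun t => cos (n%:~R * t) - 1) /\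
   cos (Rintegral rho setT (fun t => sin (n%:~R * t) - n%:~R * sin t)) =
     cos (Rintegral rho' setT (fun t => sin (n%:~R * t) - n%:~R * sin t)) /\
   sin (Rintegral rho setT (fun t => sin (n%:~R * t) - n%:~R * sin t)) =
     sin (Rintegral rho' setT (fun t => sin (n%:~R * t) - n%:~R * sin t)).
  move=> n; have [h1 h2] := Hnu n; have [h1' h2'] := Hnu' n.
  rewrite eqI in h1 h2.
  by apply: exp_cossin_eq; [rewrite -h1 -h1'|rewrite -h2 -h2'].
have hA : forall n : int, Rintegral rho' setT (fun t => cos (n%:~R * t) - 1) =
                          Rintegral rho setT (fun t => cos (n%:~R * t) - 1).
  by move=> n; have [] := key n.
have sup := @rho_support R rho rho' m phi c d hphi hc hd hind hrho hl' hA.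
have i1' : rho'.-integrable setT (EFin \o (fun t => 1 - cos t)) by case: hl'.
have cpos : forall k, 0 < `|1 - cos (phi k)|.
  move=> k; have := cos_lt1 (hphi k) => h; rewrite normr_gt0; apply/eqP => e; move: h; lra.
have fin1 : forall k, rho' [set phi k] \is a fin_num by move=> k; exact: fin_pt i1' (cpos k).
have fin2 : forall k, rho' [set (2 * pi - phi k)%R] \is a fin_num.
  by move=> k; apply: fin_pt i1' _; rewrite cos2pim; exact: cpos.
pose c' k := fine (rho' [set phi k]).
pose d' k := fine (rho' [set (2 * pi - phi k)%R]).
have c'0 : forall k, 0 <= c' k by move=> k; apply: fine_ge0; exact: measure_ge0.
have d'0 : forall k, 0 <= d' k by move=> k; apply: fine_ge0; exact: measure_ge0.
have hrho' : forall A : set R, measurable A ->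
     rho' A = (\sum_(k < m) ((c' k)%:E * \d_(phi k) A
                            + (d' k)%:E * \d_((2 * pi - phi k)%R) A))%E.
  by move=> A mA; rewrite sup //; apply: eq_bigr => k _; rewrite /c' /d' !fineK.
have L' := L1 c'0 d'0 hrho'.
have mf : forall n : int, measurable_fun setT (fun t : R => cos (n%:~R * t) - 1).
  by move=> n; have := mB (mcos (mlin (n%:~R))) (@measurable_cst _ _ R R setT (1:R)).
have mg : forall n : int, measurable_fun setT (fun t : R => sin (n%:~R * t) - n%:~R * sin t).
  move=> n.
  by have := mB (msin (mlin (n%:~R))) (measurableT_comp (mlin (n%:~R)) (msin (@measurable_id _ R setT))).
pose r k := c' k + d' k - (c k + d k).
have AH : forall n : nat, \sum_(k < m) r k * sin (pi / 2 + n%:R * phi k) + (- \sum_(k < m) r k + n%:R * 0) = 0.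
  move=> n; have := hA n; rewrite (L' _ (mf n)).2 (L _ (mf n)).2 => /eqP; rewrite -subr_eq0 => /eqP H.
  rewrite -[RHS]H mulr0 addr0 -sumrN -big_split -sumrB /=; apply: eq_bigr => k _.
  rewrite !cos_circ_sym -pmulrn (addrC (pi / 2)) sinDpihalf /r; ring.
have r0 : forall k, r k = 0.
  have Z : Iter (fun _ => 1) 1 (fun n : nat => \sum_(k < m) r k * sin (pi / 2 + n%:R * phi k)
              + (- \sum_(k < m) r k + n%:R * 0)) = (fun _ => 0 : R).
    by have -> : (fun n : nat => \sum_(k < m) r k * sin (pi / 2 + n%:R * phi k)
              + (- \sum_(k < m) r k + n%:R * 0)) = (fun _ => 0 : R);
      [apply/funext => n; exact: AH | exact: Iter0].
  rewrite Iter_F // in Z.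
  move=> k; have := lin_indep hphi (indep_inj hind) (fun n => congr1 (fun f => f n) Z) k.
  rewrite big_ord1 => /eqP; rewrite mulf_eq0 => /orP[/eqP //|].
  rewrite mulf_eq0 pnatr_eq0 /= subr_eq0 => /eqP e.
  by have := cos_lt1 (hphi k); rewrite e ltxx.
pose e k := (c' k - c k) - (d' k - d k).
have hB : forall n : nat, exists z : int,
    \sum_(k < m) e k * (sin (n%:R * phi k) - n%:R * sin (phi k)) = 2 * pi * z%:~R.
  move=> n; have [_ [hc1 hs1]] := key n; have [z hz] := cossin_eq hc1 hs1; exists z; rewrite -hz.
  rewrite (L' _ (mg n)).2 (L _ (mg n)).2 -sumrB; apply: eq_bigr => k _.
  rewrite !sin_circ_sym sin2pim -pmulrn /e; ring.
have [z hz] := boolp.choice hB.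
have e0 := NT hphi hind hz.
move=> A mA; rewrite hrho' // hrho //; apply: eq_bigr => k _.
have := r0 k; have := e0 k; rewrite /r /e => h1 h2.
have -> : c' k = c k by lra.
have -> : d' k = d k by lra.
by [].
Qed.
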